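(* Let $q,n,d,m$ be positive integers with $q\ge 2$, and let $C\subseteq[q]^n$ be a code with minimum Hamming distance at least $d$. Let $j\in\{1,\dots,n\}$ and $\alpha\in[q]$, and let $B\subseteq C$ be the set of all codewords $w\in C$ with $w_j=\alpha$. Suppose that for every coordinate $i\neq j$, every symbol of $[q]$ occurs exactly $m$ times among the entries $w_i$, $w\in B$. If $n-d$ does not divide $m(n-1)$, then for every $u\in C\setminus B$ there exists $v\in B$ with $d_H(u,v)\notin\{d,n\}$.
   Context: $[q]=\{0,1,\dots,q-1\}$. For $u,v\in[q]^n$, $d_H(u,v)$ is the number of coordinates $i$ with $u_i\neq v_i$. The minimum distance of a code is the minimum of $d_H$ over distinct codewords. *)

(* Defs.v *)
From mathcomp Require Import all_boot.
Set Implicit Arguments. Unset Strict Implicit. Unset Printing Implicit Defensive.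

(* Words of length n over the alphabet [q] = {0,...,q-1}. Coordinates are
   indexed by 'I_n (0-based: coordinate i+1 of the paper is index i). *)
Definition word (q n : nat) := {ffun 'I_n -> 'I_q}.

Definition hamming (q n : nat) (u v : word q n) : nat :=
  #|[set i : 'I_n | u i != v i]|.

Definition min_dist_ge (q n : nat) (C : {set word q n}) (d : nat) : Prop :=
  forall u v, u \in C -> v \in C -> u != v -> d <= hamming u v.

(* Main.v *)
Require Import Defs.
From mathcomp Require Import all_boot.

Theorem proposition5p2 (q n d m : nat) (hq : 2 <= q) (hn : 0 < n) (hd : 0 < d)
  (hm : 0 < m) (C : {set word q n}) (hC : min_dist_ge C d)
  (j : 'I_n) (alpha : 'I_q) (B : {set word q n})
  (hB : B = [set w in C | w j == alpha])
  (hbal : forall (i : 'I_n) (a : 'I_q), i != j ->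
            #|[set w in B | w i == a]| = m)
  (hdiv : ~~ ((n - d) %| m * (n - 1))) :
  forall u, u \in C :\: B ->
    exists2 v, v \in B & (hamming u v != d) && (hamming u v != n).
Proof.
move=> u /setDP [uC uB].
have uj : u j != alpha by apply: contra uB => e; rewrite hB inE uC.
case: (boolP [exists v in B, (hamming u v != d) && (hamming u v != n)]).
  by move=> /existsP [v /andP [vB H]]; exists v.
rewrite negb_exists_in => /forall_inP H; exfalso; move/negP: hdiv; apply.
have agree (v : word q n) : \sum_(i < n) ((u i == v i) : nat) = n - hamming u v.
  have -> : n - hamming u v = #|~: [set i | u i != v i]| by rewrite cardsCs setCK card_ord.
  rewrite -sum1_card [RHS]big_mkcond /=.
  by apply: eq_bigr => i _; rewrite !inE negbK; case: (u i == v i).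
have E : \sum_(v in B) \sum_(i < n) ((u i == v i) : nat) = m * (n - 1).
  rewrite exchange_big /=.
  rewrite (bigD1 j) //= big1; last first.
    move=> v vB; move: vB; rewrite hB inE => /andP [_ /eqP ->].
    by rewrite (negbTE uj).
  rewrite add0n.
  transitivity (\sum_(i < n | i != j) m).
    apply: eq_bigr => i ij; rewrite -(hbal i (u i) ij) -sum1_card.
    rewrite [RHS]big_mkcond [LHS]big_mkcond /=; apply: eq_bigr => v _; rewrite !inE.
    by rewrite eq_sym; case: (v \in B); case: (v i == u i).
  rewrite sum_nat_const cardC1 card_ord mulnC.
  by rewrite subn1.
rewrite -E; apply: dvdn_sum => v vB; rewrite agree.
move: (H v vB); rewrite negb_and !negbK => /orP [] /eqP ->.
  by [].
by rewrite subnn dvdn0.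
Qed.
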